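(* For every $3$-graph $F\in\mathbf{FACTOR}_3^{\cdot,2}$ we have $\pi_{\cdot}(F)=0$.
   Context: A $k$-graph $H$ has edge set $E(H)\subseteq\binom{V(H)}{k}$; $\delta_2(H)$ is the minimum over pairs of vertices of the number of edges containing the pair. An $F$-factor is a set of vertex-disjoint copies of $F$ covering all vertices; $H$ is $F$-free if it contains no copy of $F$. An $(n,p,\mu,\cdot)$ $k$-graph is a $k$-graph $H$ on a vertex set $V$ with $|V|=n$ such that for all $X_1,\dots,X_k\subseteq V$, the number of $k$-tuples $(x_1,\dots,x_k)\in X_1\times\cdots\times X_k$ with $\{x_1,\dots,x_k\}\in E(H)$ is at least $p|X_1|\cdots|X_k|-\mu n^k$. $\mathbf{FACTOR}_3^{\cdot,2}$ is the class of $3$-graphs $F$ such that for all $0<p,\alpha<1$ there exist $n_0$ and $\mu>0$ such that every $(n,p,\mu,\cdot)$ $3$-graph $H$ with $\delta_2(H)\ge\alpha n$, $n\ge n_0$ and $v(F)\mid n$ has an $F$-factor. $\pi_{\cdot}(F)=\sup\{p\in[0,1]:$ for every $\mu>0$ and $n_0$ there is an $F$-free $(n,p,\mu,\cdot)$ $3$-graph with $n\ge n_0\}$. *)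

(* Defs.v *)
From HB Require Import structures.
From mathcomp Require Import all_boot all_order all_algebra.
From mathcomp Require Import boolp classical_sets reals.
Set Implicit Arguments. Unset Strict Implicit. Unset Printing Implicit Defensive.
Import Order.TTheory GRing.Theory Num.Theory.
Local Open Scope ring_scope.

Definition is_kgraph (k : nat) (V : finType) (E : {set {set V}}) : Prop :=
  forall e, e \in E -> #|e| = k.

Definition is_copy (VF V : finType) (EF : {set {set VF}}) (E : {set {set V}})
  (f : VF -> V) : Prop :=
  injective f /\ forall e, e \in EF -> f @: e \in E.

Definition F_free (VF V : finType) (EF : {set {set VF}}) (E : {set {set V}}) : Prop :=
  ~ exists f : VF -> V, is_copy EF E f.

Definition has_F_factor (VF V : finType) (EF : {set {set VF}}) (E : {set {set V}}) : Prop :=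
  exists P : {set {set V}}, finset.partition P [set: V] /\
    forall B, B \in P -> exists f : VF -> V, is_copy EF E f /\ f @: [set: VF] = B.

Definition min_codeg_ge (R : realType) (V : finType) (E : {set {set V}}) (a : R) : Prop :=
  forall u v : V, u != v -> a <= (#|[set e in E | (u \in e) && (v \in e)]|)%:R.

Definition ntriples (n : nat) (E : {set {set 'I_n}}) (X1 X2 X3 : {set 'I_n}) : nat :=
  #|[set t : 'I_n * 'I_n * 'I_n |
      [&& t.1.1 \in X1, t.1.2 \in X2, t.2 \in X3 &
          [set t.1.1; t.1.2; t.2] \in E]]|.

Definition is_npmu_dot (R : realType) (n : nat) (p mu : R) (E : {set {set 'I_n}}) : Prop :=
  is_kgraph 3 E /\
  forall X1 X2 X3 : {set 'I_n},
    p * (#|X1|)%:R * (#|X2|)%:R * (#|X3|)%:R - mu * (n%:R) ^+ 3 <= (ntriples E X1 X2 X3)%:R.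

Definition in_FACTOR (R : realType) (VF : finType) (EF : {set {set VF}}) : Prop :=
  forall p alpha : R, 0 < p < 1 -> 0 < alpha < 1 ->
  exists (n0 : nat) (mu : R), 0 < mu /\
    forall (n : nat) (E : {set {set 'I_n}}),
      is_npmu_dot p mu E -> min_codeg_ge E (alpha * n%:R) ->
      (n0 <= n)%N -> (#|VF| %| n)%N -> has_F_factor EF E.

Definition pi_dot (R : realType) (VF : finType) (EF : {set {set VF}}) : R :=
  sup [set p : R | 0 <= p <= 1 /\
        forall (mu : R) (n0 : nat), 0 < mu ->
          exists (n : nat) (E : {set {set 'I_n}}),
            (n0 <= n)%N /\ is_npmu_dot p mu E /\ F_free EF E]%classic.

(* Main.v *)
Require Import Defs.
From HB Require Import structures.
From mathcomp Require Import all_boot all_order all_algebra.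
From mathcomp Require Import boolp classical_sets reals.
From mathcomp Require Import zify ring lra.
Import Order.TTheory GRing.Theory Num.Theory.
Set Implicit Arguments. Unset Strict Implicit.

Lemma widen_inj m n (h : (m <= n)%N) : injective (widen_ord h).
Proof. by move=> a b /(congr1 val) /= /val_inj. Qed.

Lemma ntriples_restr m n (h : (m <= n)%N) (E : {set {set 'I_n}}) (E' : {set {set 'I_m}}) :
  (forall e : {set 'I_m}, widen_ord h @: e \in E -> e \in E') ->
  forall X1 X2 X3 : {set 'I_m}, (ntriples E (widen_ord h @: X1) (widen_ord h @: X2) (widen_ord h @: X3)
     <= ntriples E' X1 X2 X3)%N.
Proof.
move=> HE X1 X2 X3; rewrite /ntriples.
set w := widen_ord h.
set g := fun t : 'I_m * 'I_m * 'I_m => (w t.1.1, w t.1.2, w t.2).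
have ginj : injective g.
  move=> [[a b] c] [[a' b'] c'] [] ha hb hc.
  by rewrite (val_inj ha) (val_inj hb) (val_inj hc).
rewrite -(card_imset _ ginj); apply: subset_leq_card; apply/fintype.subsetP.
move=> [[x y] z]; rewrite inE /= => /and4P [/imsetP [a Ha ->] /imsetP [b Hb ->] /imsetP [c Hc ->] He].
apply/imsetP; exists (a, b, c) => //.
rewrite inE /= Ha Hb Hc /=; apply: HE.
suff -> : [set widen_ord h x | x in [set a; b; c]] = [set w a; w b; w c] by [].
apply/setP => u; rewrite !inE; apply/imsetP/idP.
  move=> [v]; rewrite !inE => H ->; rewrite /w.
  by case/orP: H => [/orP[]|] /eqP ->; rewrite eqxx ?orbT.
by case/orP => [/orP[]|] /eqP ->; [exists a | exists b | exists c]; rewrite // !inE eqxx ?orbT.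
Qed.

Lemma card3 (T : finType) (u v x : T) : u != v -> x != u -> x != v -> #|[set u; v; x]| = 3%N.
Proof.
move=> uv xu xv; rewrite finset.setUC cardsU1 cards2 !inE negb_or.
by rewrite xv xu uv.
Qed.

Lemma codeg_lb (T : finType) (S : {set T}) (E' : {set {set T}}) :
  (forall e : {set T}, #|e| = 3%N -> e :&: S != finset.set0 -> e \in E') ->
  forall u v, u != v -> (#|S| <= 2 + #|[set e in E' | (u \in e) && (v \in e)]|)%N.
Proof.
move=> HE u v uv.
have h1 : (#|S| <= 2 + #|S :\ u :\ v|)%N.
  rewrite (cardsD1 u S) (cardsD1 v (S :\ u)).
  by case: (u \in S); case: (v \in S :\ u); rewrite ?add0n ?add1n /= ?ltnS ?leqW // ?leq_addl.
apply: (leq_trans h1); rewrite leq_add2l.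
have inj : {in S :\ u :\ v &, injective (fun x => [set u; v; x])}.
  move=> x y; rewrite !inE => /and3P [xv xu _] /and3P [yv yu _] Exy.
  have : x \in [set u; v; y] by rewrite -Exy !inE eqxx !orbT.
  by rewrite !inE (negbTE xv) (negbTE xu) /= => /eqP.
rewrite -(card_in_imset inj); apply: subset_leq_card; apply/fintype.subsetP.
move=> e /imsetP [x]; rewrite !inE => /and3P [xv xu xS] ->.
rewrite !inE !eqxx /= ?orbT /= andbT; apply: HE; first exact: card3.
apply/finset.set0Pn; exists x; rewrite !inE eqxx xS !orbT //.
Qed.

Lemma factor_count (T : finType) (P : {set {set T}}) (S : {set T}) (k : nat) (x0 : T) :
  finset.partition P [set: T] -> (forall B, B \in P -> #|B| = k /\ B :&: S != finset.set0) ->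
  #|T| = (#|P| * k)%N /\ (#|P| <= #|S|)%N.
Proof.
move=> HP HB; split.
  rewrite -cardsT (card_partition HP) -sum_nat_const.
  by apply: eq_bigr => B /HB [].
pose h B := odflt x0 [pick x in B :&: S].
have hB : forall B, B \in P -> h B \in B :&: S.
  move=> B /HB [_]; rewrite /h; case: pickP => [x //| H0].
  by case/set0Pn => x; rewrite H0.
have inj : {in P &, injective h}.
  move=> B1 B2 H1 H2 E12.
  have := hB _ H1; have := hB _ H2; rewrite !inE -E12 => /andP [a _] /andP [b _].
  have triv : finset.trivIset P by case/and3P: HP.
  by rewrite -(def_pblock triv H1 b) (def_pblock triv H2 a).
rewrite -(card_in_imset inj); apply: subset_leq_card; apply/fintype.subsetP.
by move=> x /imsetP [B /hB]; rewrite inE => /andP [_ ?] ->.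
Qed.

Local Open Scope ring_scope.

Lemma no_pos (R : realType) (VF : finType) (EF : {set {set VF}}) :
  in_FACTOR R EF -> (0 < #|VF|)%N -> forall p : R, 0 < p -> p <= 1 ->
  ~ (forall (mu : R) (n0 : nat), 0 < mu ->
          exists (n : nat) (E : {set {set 'I_n}}),
            (n0 <= n)%N /\ is_npmu_dot p mu E /\ F_free EF E).
Proof.
move=> HF k0 p p0 p1 H.
set k := #|VF| in k0.
have kR : 0 < (k%:R : R) by rewrite ltr0n.
have [n0 [mu [mu0 Hfac]]] := HF (p/2) ((8*k)%:R^-1) ltac:(apply/andP; split; lra)
   ltac:(apply/andP; split; [rewrite invr_gt0 ltr0n muln_gt0 k0 // | rewrite invf_lt1 ?ltr0n ?muln_gt0 ?k0 // ltr1n; lia]).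
have [n [E [hn [HE Hfree]]]] := H (mu/8) ((n0+21)*k)%N ltac:(lra).
set t := (n %/ k)%N.
have ht : (n0 + 21 <= t)%N by rewrite -(mulnK (n0+21) k0); exact: leq_div2r.
set m := (t * k)%N.
have hmn : (m <= n)%N := leq_divM n k.
have hkm : (k <= m)%N by rewrite /m leq_pmull //; lia.
have hnm : (n <= 2 * m)%N.
  have := divn_eq n k; have := ltn_pmod n k0; rewrite -/t -/m; lia.
set s := (t %/ 2)%N.
have hsm : (s <= m)%N by rewrite /m /s; apply: (leq_trans (leq_div _ _)); rewrite leq_pmulr.
pose w := widen_ord hmn.
pose Sset : {set 'I_m} := [set widen_ord hsm i | i : 'I_s].
have cS : #|Sset| = s by rewrite card_imset ?card_ord //; exact: widen_inj.
pose E' : {set {set 'I_m}} := [set e : {set 'I_m} | (#|e| == 3%N) && ((w @: e \in E) || (e :&: Sset != finset.set0))].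
have HE' : forall e : {set 'I_m}, widen_ord hmn @: e \in E -> e \in E'.
  move=> e He; rewrite inE He orTb andbT.
  by rewrite -(card_imset (mem e) (@widen_inj _ _ hmn)) (proj1 HE _ He).
have Hnpmu : is_npmu_dot (p / 2) mu E'.
  split; first by move=> e; rewrite inE => /andP [/eqP].
  move=> X1 X2 X3.
  have h1 := proj2 HE (w @: X1) (w @: X2) (w @: X3).
  rewrite !card_imset in h1; try exact: widen_inj.
  have h2 := ntriples_restr HE' X1 X2 X3.
  have h3 : (ntriples E (w @: X1) (w @: X2) (w @: X3))%:R <= (ntriples E' X1 X2 X3)%:R :> R
    by rewrite ler_nat.
  have h4 : (n ^ 3 <= 8 * m ^ 3)%N.
    have : (n ^ 3 <= (2 * m) ^ 3)%N by rewrite leq_exp2r.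
    by rewrite expnMn.
  have h5 : (n%:R ^+ 3 : R) <= 8 * m%:R ^+ 3.
    by rewrite -!natrX -(natrM R 8) ler_nat.
  set x1 := (#|X1|%:R : R) in h1 *. set x2 := (#|X2|%:R : R) in h1 *.
  set x3 := (#|X3|%:R : R) in h1 *.
  have hP : 0 <= x1 * x2 * x3 by rewrite !mulr_ge0 // ler0n.
  have h6 : 0 <= mu * (8 * m%:R ^+ 3 - n%:R ^+ 3) by apply: mulr_ge0; [exact: ltW | rewrite subr_ge0].
  have h7 : 0 <= p * (x1 * x2 * x3) by rewrite mulr_ge0 // ltW.
  rewrite -!mulrA in h1 *.
  rewrite -!mulrA in hP h7.
  nra.
have Hcod : min_codeg_ge E' ((8 * k)%:R^-1 * m%:R : R).
  move=> u v uv.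
  have HS : forall e : {set 'I_m}, #|e| = 3%N -> e :&: Sset != finset.set0 -> e \in E'.
    by move=> e e3 eS; rewrite inE e3 eS eqxx orbT.
  have := codeg_lb HS uv; rewrite cS.
  set c := #|_|.
  move=> hc.
  have htc : (t <= 8 * c)%N by rewrite /s in hc; lia.
  have : (t%:R : R) <= 8 * c%:R by rewrite -(natrM R 8) ler_nat.
  have -> : (8 * k)%:R^-1 * m%:R = t%:R / 8 :> R.
    rewrite /m !natrM; field; rewrite pnatr_eq0; lia.
  lra.
have Hn0 : (n0 <= m)%N by rewrite /m; apply: (leq_trans _ (leq_pmulr _ k0)); lia.
have Hdv : (#|VF| %| m)%N by rewrite /m dvdn_mull.
have [P [HP HB]] := Hfac m E' Hnpmu Hcod Hn0 Hdv.
have m0 : (0 < m)%N by lia.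
have := @factor_count _ P Sset k (Ordinal m0) HP.
case.
  move=> B /HB [f [[finj fE] fB]]; split.
    by rewrite -fB card_imset // cardsT.
  apply/negP => /eqP BS.
  apply: Hfree; exists (fun x => w (f x)); split.
    by move=> a b /(@widen_inj _ _ hmn) /finj.
  move=> e eF; have := fE e eF; rewrite inE => /andP [_ /orP [] ].
    suff -> : [set w (f x) | x in e] = w @: (f @: e) by [].
    by rewrite -imset_comp.
  move=> /finset.set0Pn [x]; rewrite inE => /andP [xe xS]; exfalso.
  have : x \in B :&: Sset by rewrite inE xS andbT -fB; exact: (fintype.subsetP (imsetS f (finset.subsetT e))) x xe.
  by rewrite BS inE.
rewrite card_ord cS => Em hP.
have Em' : (t * k = #|P| * k)%N := Em.
have := congr1 (fun x => x %/ k)%N Em'; rewrite /= !mulnK // => tP.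
rewrite /s -tP in hP; lia.
Qed.

Unset Implicit Arguments.
Local Open Scope classical_set_scope.

Theorem mainTheorem14 (R : realType) (VF : finType) (EF : {set {set VF}}) :
  is_kgraph 3 EF -> in_FACTOR R EF -> pi_dot R EF = 0.
Proof.
move=> HE HF; rewrite /pi_dot.
set S := (X in sup X).
have HS : S `<=` [set 0].
  move=> p [/andP [pge0 ple1] Hp]; rewrite /=.
  case: (posnP #|VF|) => [k0 | k0].
    exfalso; have [n [E [_ [_ Hfree]]]] := Hp 1 0%N ltr01; apply: Hfree.
    have HV : forall x : VF, False.
      by move=> x; have := card0_eq k0 x; rewrite !inE.
    exists (fun x => match HV x with end); split; first by move=> x; case: (HV x).
    move=> e eE; have := HE e eE; have := max_card e; rewrite k0 => h3 h4; rewrite h4 in h3; done.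
  apply/eqP; rewrite eq_le pge0 andbT leNgt; apply/negP => pgt0.
  exact: (no_pos HF k0 pgt0 ple1 Hp).
by case: (subset_set1 HS) => ->; [exact: sup0 | exact: sup1].
Qed.
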